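(* Let $\rho\in\mathcal{D}$ be non-singular with $f$ differentiable at $\rho$. If $\rho$ is a minimizer of $f$ on $\mathcal{D}$, then $\rho(\alpha)=\rho$ for all $\alpha\ge0$. If $\rho(\alpha)=\rho$ for some $\alpha>0$, then $\rho$ is a minimizer of $f$ on $\mathcal{D}$.
   Context: $\mathcal{D}=\{\rho\in\mathbb{C}^{d\times d}:\rho\succeq0,\ \operatorname{tr}\rho=1\}$; $f$ is a convex function on $d\times d$ Hermitian matrices; $\nabla f(\rho)$ is its Hermitian gradient w.r.t. $\langle A,B\rangle=\operatorname{tr}(A^{\mathrm H}B)$. $\rho(\alpha):=\exp[\log\rho-\alpha\nabla f(\rho)]/\operatorname{tr}\exp[\log\rho-\alpha\nabla f(\rho)]$ (matrix exponential/logarithm). *)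

(* Defs.v *)
From HB Require Import structures.
From mathcomp Require Import all_boot all_order all_algebra.
From mathcomp Require Import complex.
From mathcomp Require Import reals.
From mathcomp.analysis Require Import sequences exp.

Set Implicit Arguments.
Unset Strict Implicit.
Unset Printing Implicit Defensive.

Import Order.TTheory GRing.Theory Num.Theory Num.Def.
Local Open Scope ring_scope.

Definition adjmx (R : realType) (m n : nat) (A : 'M[R[i]]_(m, n)) : 'M[R[i]]_(n, m) :=
  map_mx conjC A^T.

(* Hermitian matrices: A^H = A (library notion hermsymmx : A^T = conj A). *)
Definition hermmx (R : realType) (d : nat) (A : 'M[R[i]]_d) : Prop :=
  A \is hermsymmx.

Definition psdmx (R : realType) (d : nat) (A : 'M[R[i]]_d) : Prop :=
  forall v : 'rV[R[i]]_d, 0 <= (v *m A *m adjmx v) 0 0.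

Definition density (R : realType) (d : nat) (rho : 'M[R[i]]_d) : Prop :=
  hermmx rho /\ psdmx rho /\ \tr rho = 1.

Definition hsdot (R : realType) (d : nat) (A B : 'M[R[i]]_d) : R[i] :=
  \tr (adjmx A *m B).

Definition frob (R : realType) (d : nat) (A : 'M[R[i]]_d) : R :=
  Num.sqrt (complex.Re (hsdot A A)).

(* Matrix function of a Hermitian matrix through its spectral decomposition
   A = P^-1 diag(lambda) P (P unitary, lambda real):
   g(A) := P^-1 diag(g(lambda)) P. *)
Definition mxfun (R : realType) (d : nat) (g : R -> R) (A : 'M[R[i]]_d) : 'M[R[i]]_d :=
  invmx (spectralmx A) *m
  diag_mx (map_mx (fun z : R[i] => (g (complex.Re z))%:C%C) (spectral_diag A)) *m
  spectralmx A.

Definition expmx (R : realType) (d : nat) (A : 'M[R[i]]_d) := mxfun (@expR R) A.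
Definition logmx (R : realType) (d : nat) (A : 'M[R[i]]_d) := mxfun (@ln R) A.

Definition convex_herm (R : realType) (d : nat) (f : 'M[R[i]]_d -> R) : Prop :=
  forall (A B : 'M[R[i]]_d) (t : R), hermmx A -> hermmx B -> 0 <= t -> t <= 1 ->
    f ((t%:C)%C *: A + ((1 - t)%:C)%C *: B) <= t * f A + (1 - t) * f B.

(* f is (Frechet) differentiable at rho, on the real space of Hermitian
   matrices, with Hermitian gradient G w.r.t. <A,B> = tr(A^H B):
   f(rho + H) = f(rho) + <G,H> + o(||H||) for Hermitian H. *)
Definition is_gradient (R : realType) (d : nat) (f : 'M[R[i]]_d -> R)
    (rho G : 'M[R[i]]_d) : Prop :=
  hermmx G /\
  forall eps : R, 0 < eps -> exists2 delta : R, 0 < delta &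
    forall H : 'M[R[i]]_d, hermmx H -> frob H < delta ->
      `| f (rho + H) - f rho - complex.Re (hsdot G H) | <= eps * frob H.

Definition rho_step (R : realType) (d : nat) (rho G : 'M[R[i]]_d) (alpha : R)
    : 'M[R[i]]_d :=
  let E := expmx (logmx rho - (alpha%:C)%C *: G) in (\tr E)^-1 *: E.

Definition minimizer (R : realType) (d : nat) (f : 'M[R[i]]_d -> R)
    (rho : 'M[R[i]]_d) : Prop :=
  density rho /\ forall sigma : 'M[R[i]]_d, density sigma -> f rho <= f sigma.

(* Main.v *)
Require Import Defs.
From HB Require Import structures.
From mathcomp Require Import all_boot all_order all_algebra.
From mathcomp Require Import complex.
From mathcomp Require Import reals.
From mathcomp.analysis Require Import sequences exp.
Import Order.TTheory GRing.Theory Num.Theory Num.Def.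
Local Open Scope ring_scope.
Set Implicit Arguments.
Unset Strict Implicit.
Unset Printing Implicit Defensive.
From mathcomp Require Import ring lra.
Section Basic.
Variable R : realType.
Local Notation C := R[i].

Lemma adjmxK m n (A : 'M[C]_(m, n)) : adjmx (adjmx A) = A.
Proof. by apply/matrixP => i j; rewrite !mxE conjCK. Qed.

Lemma adjmx_mul m n p (A : 'M[C]_(m, n)) (B : 'M[C]_(n, p)) :
  adjmx (A *m B) = adjmx B *m adjmx A.
Proof. by rewrite /adjmx trmx_mul map_mxM. Qed.

Lemma adjmxD m n (A B : 'M[C]_(m, n)) : adjmx (A + B) = adjmx A + adjmx B.
Proof. by apply/matrixP => i j; rewrite !mxE rmorphD. Qed.

Lemma adjmxN m n (A : 'M[C]_(m, n)) : adjmx (- A) = - adjmx A.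
Proof. by apply/matrixP => i j; rewrite !mxE rmorphN. Qed.

Lemma adjmxZ m n a (A : 'M[C]_(m, n)) : adjmx (a *: A) = conjC a *: adjmx A.
Proof. by apply/matrixP => i j; rewrite !mxE rmorphM. Qed.

Lemma adjmx_diag n (D : 'rV[C]_n) : adjmx (diag_mx D) = diag_mx (map_mx conjC D).
Proof.
apply/matrixP => i j; rewrite !mxE rmorphMn eq_sym.
by case: (eqVneq i j) => [->|//].
Qed.

Lemma adjmx1 n : adjmx (1%:M : 'M[C]_n) = 1%:M.
Proof.
apply/matrixP => i j; rewrite !mxE eq_sym; case: (i == j); by rewrite ?rmorph1 ?rmorph0.
Qed.

Lemma hermP n (A : 'M[C]_n) : hermmx A <-> adjmx A = A.
Proof.
rewrite /hermmx; split.
  by move/is_hermitianmxP; rewrite expr0 scale1r => h; exact: (esym h).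
by move=> h; apply/is_hermitianmxP; rewrite expr0 scale1r.
Qed.

Lemma spec_inv n (A : 'M[C]_n) : invmx (spectralmx A) = adjmx (spectralmx A).
Proof. exact: invmx_unitary (spectral_unitarymx A). Qed.

Lemma spec_unit n (A : 'M[C]_n) : spectralmx A \in unitmx.
Proof. exact: spectral_unit. Qed.

Lemma spec_mulV n (A : 'M[C]_n) : spectralmx A *m adjmx (spectralmx A) = 1%:M.
Proof. by rewrite -spec_inv mulmxV // spec_unit. Qed.

Lemma spec_Vmul n (A : 'M[C]_n) : adjmx (spectralmx A) *m spectralmx A = 1%:M.
Proof. by rewrite -spec_inv mulVmx // spec_unit. Qed.

Lemma spec_herm n (A : 'M[C]_n) : hermmx A ->
  A = adjmx (spectralmx A) *m diag_mx (spectral_diag A) *m spectralmx A /\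
  forall j, spectral_diag A 0 j = (complex.Re (spectral_diag A 0 j))%:C%C.
Proof.
move=> hA; split.
  by rewrite -spec_inv; apply/orthomx_spectralP/hermitian_normalmx.
move=> j; have /mxOverP /(_ 0 j) := hermitian_spectral_diag_real hA.
by move=> /RRe_real.
Qed.
End Basic.
Section Calc.
Variable R : realType.
Local Notation C := R[i].

Definition gD (g : R -> R) n (L : 'rV[C]_n) : 'rV[C]_n :=
  map_mx (fun z : C => (g (complex.Re z))%:C%C) L.

Lemma mxfunE g n (A : 'M[C]_n) :
  mxfun g A = adjmx (spectralmx A) *m diag_mx (gD g (spectral_diag A)) *m spectralmx A.
Proof. by rewrite /mxfun spec_inv. Qed.

Lemma herm_conj n (U : 'M[C]_n) (L : 'rV[C]_n) :
  (forall j, L 0 j = (complex.Re (L 0 j))%:C%C) -> hermmx (adjmx U *m diag_mx L *m U).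
Proof.
move=> hL; apply/hermP; rewrite !adjmx_mul adjmxK adjmx_diag mulmxA.
congr (_ *m _ *m _); congr diag_mx; apply/matrixP => i j; rewrite mxE (ord1 i) [in RHS]hL.
by rewrite {1}hL; exact: conjc_real.
Qed.

Lemma gD_real g n (L : 'rV[C]_n) j : gD g L 0 j = (complex.Re (gD g L 0 j))%:C%C.
Proof. by rewrite mxE. Qed.

Lemma mxfun_herm g n (A : 'M[C]_n) : hermmx (mxfun g A).
Proof. rewrite mxfunE; apply: herm_conj; exact: gD_real. Qed.

Lemma mxfun_uniq g n (A U : 'M[C]_n) (L : 'rV[C]_n) : hermmx A -> U \in unitmx ->
  A = invmx U *m diag_mx L *m U -> mxfun g A = invmx U *m diag_mx (gD g L) *m U.
Proof.
move=> hA uU eU.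
have [eA _] := spec_herm hA.
rewrite -spec_inv in eA.
rewrite /mxfun.
set P := spectralmx A in eA *; set D := spectral_diag A in eA *.
have uP : P \in unitmx by exact: spec_unit.
have [W eWd] : exists W, W = P *m invmx U by eexists.
have hW : diag_mx D *m W = W *m diag_mx L.
  have := congr1 (fun X => P *m X *m invmx U) (etrans (esym eA) eU).
  rewrite /= !mulmxA mulmxV // mul1mx mulmxK // eWd => h.
  by rewrite mulmxA h.
have hgW : diag_mx (gD g D) *m W = W *m diag_mx (gD g L).
  apply/matrixP => i j; move/matrixP: hW => /(_ i j).
  rewrite !mul_diag_mx !mul_mx_diag !mxE => h.
  case: (eqVneq (W i j) 0) => [->|nz]; first by rewrite mulr0 mul0r.
  have -> : D 0 i = L 0 j by apply: (mulIf nz); rewrite h mulrC.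
  by rewrite mulrC.
have eP : P = W *m U by rewrite eWd mulmxKV.
have eW : invmx P *m W = invmx U by rewrite eWd mulmxA mulVmx // mul1mx.
rewrite {2}eP !mulmxA -[invmx P *m _ *m W]mulmxA hgW.
by rewrite mulmxA eW.
Qed.
End Calc.
Section Grad.
Variable R : realType.
Local Notation C := R[i].

Lemma ReM_real (s : R) (z : C) : complex.Re ((s%:C)%C * z) = s * complex.Re z.
Proof. by case: z => a b /=; rewrite mul0r subr0. Qed.

Lemma conj_real (s : R) : conjC ((s%:C)%C : C) = (s%:C)%C.
Proof. exact: conjc_real. Qed.

Lemma hsdotZr n (G H : 'M[C]_n) a : hsdot G (a *: H) = a * hsdot G H.
Proof. by rewrite /hsdot -scalemxAr mxtraceZ. Qed.

Lemma hsdotZl n (G H : 'M[C]_n) a : hsdot (a *: G) H = conjC a * hsdot G H.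
Proof. by rewrite /hsdot adjmxZ -scalemxAl mxtraceZ. Qed.

Lemma frobZ n (H : 'M[C]_n) (s : R) : 0 <= s -> frob ((s%:C)%C *: H) = s * frob H.
Proof.
move=> s0; rewrite /frob hsdotZr hsdotZl conj_real mulrA -rmorphM /= ReM_real.
by rewrite sqrtrM ?sqr_ge0 // sqrtr_sqr ger0_norm.
Qed.

Lemma frob_ge0 n (H : 'M[C]_n) : 0 <= frob H.
Proof. exact: sqrtr_ge0. Qed.

Lemma hermZ n (H : 'M[C]_n) (s : R) : hermmx H -> hermmx ((s%:C)%C *: H).
Proof. by move/hermP => h; apply/hermP; rewrite adjmxZ conj_real h. Qed.

Lemma grad_le n (f : 'M[C]_n -> R) rho G H (K : R) : is_gradient f rho G -> hermmx H ->
  (forall s : R, 0 < s -> s <= 1 -> f (rho + (s%:C)%C *: H) - f rho <= s * K) ->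
  complex.Re (hsdot G H) <= K.
Proof.
move=> [_ hg] hH hK; rewrite leNgt; apply/negP => gK.
set g := complex.Re (hsdot G H) in gK *.
set F := frob H; have F0 : 0 <= F := frob_ge0 H.
set e := g - K; have e0 : 0 < e by rewrite subr_gt0.
have F1 : 0 < 2 * (F + 1) by rewrite mulr_gt0 // ltr_wpDl.
pose eps := e / (2 * (F + 1)).
have eps0 : 0 < eps by rewrite divr_gt0.
have [del del0 hdel] := hg eps eps0.
pose s := Num.min 1 (del / (2 * (F + 1))).
have s0 : 0 < s by rewrite lt_min ltr01 divr_gt0.
have s1 : s <= 1 by rewrite ge_min lexx.
have s2 : s <= del / (2 * (F + 1)) by rewrite ge_min lexx orbT.
have hF : frob ((s%:C)%C *: H) < del.
  rewrite (frobZ _ (ltW s0)).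
  apply: (le_lt_trans (y := del / (2 * (F + 1)) * F)); first by rewrite ler_wpM2r.
  rewrite mulrAC ltr_pdivrMr // ltr_pM2l //; lra.
have := hdel _ (hermZ s hH) hF.
rewrite (frobZ _ (ltW s0)) hsdotZr ReM_real -/g.
have := hK s s0 s1.
have heps : eps * (2 * (F + 1)) = e by rewrite /eps mulfVK // gt_eqF.
rewrite /e in heps.
move=> h2 h1.
move: h1; rewrite ler_norml => /andP[h1 _].
rewrite -/F in h1; clearbody s eps g F.
have h3 : s * (g - K) <= eps * (s * F) by lra.
rewrite -heps in h3.
have p0 : 0 < eps * s by rewrite mulr_gt0.
have p1 : 0 < eps * s * (F + 2) by rewrite mulr_gt0 // ltr_wpDl.
nra.
Qed.

Lemma grad_ge n (f : 'M[C]_n -> R) rho G H (K : R) : is_gradient f rho G -> hermmx H ->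
  (forall s : R, 0 < s -> s <= 1 -> s * K <= f (rho + (s%:C)%C *: H) - f rho) ->
  K <= complex.Re (hsdot G H).
Proof.
move=> [_ hg] hH hK; rewrite leNgt; apply/negP => gK.
set g := complex.Re (hsdot G H) in gK *.
set F := frob H; have F0 : 0 <= F := frob_ge0 H.
set e := K - g; have e0 : 0 < e by rewrite subr_gt0.
have F1 : 0 < 2 * (F + 1) by rewrite mulr_gt0 // ltr_wpDl.
pose eps := e / (2 * (F + 1)).
have eps0 : 0 < eps by rewrite divr_gt0.
have [del del0 hdel] := hg eps eps0.
pose s := Num.min 1 (del / (2 * (F + 1))).
have s0 : 0 < s by rewrite lt_min ltr01 divr_gt0.
have s1 : s <= 1 by rewrite ge_min lexx.
have s2 : s <= del / (2 * (F + 1)) by rewrite ge_min lexx orbT.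
have hF : frob ((s%:C)%C *: H) < del.
  rewrite (frobZ _ (ltW s0)).
  apply: (le_lt_trans (y := del / (2 * (F + 1)) * F)); first by rewrite ler_wpM2r.
  rewrite mulrAC ltr_pdivrMr // ltr_pM2l //; lra.
have := hdel _ (hermZ s hH) hF.
rewrite (frobZ _ (ltW s0)) hsdotZr ReM_real -/g.
have := hK s s0 s1.
have heps : eps * (2 * (F + 1)) = e by rewrite /eps mulfVK // gt_eqF.
rewrite /e in heps.
move=> h2 h1.
move: h1; rewrite ler_norml => /andP[_ h1].
rewrite -/F in h1; clearbody s eps g F.
have h3 : s * (K - g) <= eps * (s * F) by lra.
rewrite -heps in h3.
have p0 : 0 < eps * s by rewrite mulr_gt0.
have p1 : 0 < eps * s * (F + 2) by rewrite mulr_gt0 // ltr_wpDl.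
nra.
Qed.
End Grad.
Section Dens.
Variable R : realType.
Local Notation C := R[i].

Lemma comb_eq n (rho sigma : 'M[C]_n) (s : R) :
  rho + (s%:C)%C *: (sigma - rho) = (s%:C)%C *: sigma + ((1 - s)%:C)%C *: rho.
Proof.
apply/matrixP => i j; rewrite !mxE rmorphB rmorph1 /=.
by rewrite mulrBr mulrBl mul1r addrCA.
Qed.

Lemma herm_comb n (A B : 'M[C]_n) (s t : R) : hermmx A -> hermmx B ->
  hermmx ((s%:C)%C *: A + (t%:C)%C *: B).
Proof.
move=> /hermP hA /hermP hB; apply/hermP.
by rewrite adjmxD !adjmxZ !conj_real hA hB.
Qed.

Lemma herm_add n (A B : 'M[C]_n) : hermmx A -> hermmx B -> hermmx (A + B).
Proof. by move=> /hermP hA /hermP hB; apply/hermP; rewrite adjmxD hA hB. Qed.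

Lemma herm_opp n (A : 'M[C]_n) : hermmx A -> hermmx (- A).
Proof. by move=> /hermP hA; apply/hermP; rewrite adjmxN hA. Qed.

Lemma mxaddE m n (A B : 'M[C]_(m, n)) i j : (A + B) i j = A i j + B i j.
Proof. by rewrite mxE. Qed.
Lemma mxscaleE m n a (A : 'M[C]_(m, n)) i j : (a *: A) i j = a * A i j.
Proof. by rewrite mxE. Qed.
Lemma mxoppE m n (A : 'M[C]_(m, n)) i j : (- A) i j = - A i j.
Proof. by rewrite mxE. Qed.

Lemma psd_comb n (A B : 'M[C]_n) (s t : R) : psdmx A -> psdmx B -> 0 <= s -> 0 <= t ->
  psdmx ((s%:C)%C *: A + (t%:C)%C *: B).
Proof.
move=> pA pB s0 t0 v.
rewrite mulmxDr mulmxDl -!scalemxAr -!scalemxAl mxaddE !mxscaleE.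
by rewrite addr_ge0 // mulr_ge0 // ?ler0c.
Qed.

Lemma density_comb n (rho sigma : 'M[C]_n) (s : R) : density sigma -> density rho ->
  0 <= s -> s <= 1 -> density (rho + (s%:C)%C *: (sigma - rho)).
Proof.
move=> [hs [ps ts]] [hr [pr tr]] s0 s1; rewrite comb_eq; split; last split.
- exact: herm_comb.
- by apply: psd_comb; rewrite // subr_ge0.
- rewrite mxtraceD !mxtraceZ ts tr !mulr1 -rmorphD /=.
  by rewrite addrC subrK.
Qed.

Lemma dirA n (f : 'M[C]_n -> R) rho G : is_gradient f rho G -> minimizer f rho ->
  forall sigma, density sigma -> 0 <= complex.Re (hsdot G (sigma - rho)).
Proof.
move=> hg [dr mr] sigma ds.
apply: (grad_ge hg).
  by apply: herm_add; [case: ds | apply: herm_opp; case: dr].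
move=> s s0 s1; rewrite mulr0 subr_ge0; apply: mr.
exact: density_comb (ltW s0) s1.
Qed.

Lemma dirB n (f : 'M[C]_n -> R) rho G : convex_herm f -> is_gradient f rho G ->
  density rho ->
  forall sigma, density sigma -> complex.Re (hsdot G (sigma - rho)) <= f sigma - f rho.
Proof.
move=> cf hg dr sigma ds.
apply: (grad_le hg).
  by apply: herm_add; [case: ds | apply: herm_opp; case: dr].
move=> s s0 s1; rewrite comb_eq.
have := cf sigma rho s (proj1 ds) (proj1 dr) (ltW s0) s1.
lra.
Qed.
End Dens.
Section Rho.
Variable R : realType.
Local Notation C := R[i].

Lemma trace_conj n (U M : 'M[C]_n) : U \in unitmx -> \tr (invmx U *m M *m U) = \tr M.
Proof. by move=> uU; rewrite mxtrace_mulC mulmxA mulmxV // mul1mx. Qed.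

Lemma adjmx_delta n (j : 'I_n) : adjmx (delta_mx 0 j : 'rV[C]_n) = delta_mx j 0.
Proof.
apply/matrixP => a b; rewrite !mxE (ord1 b).
by case: (a == j); rewrite /= ?rmorph1 ?rmorph0.
Qed.

Lemma entry_delta n (M : 'M[C]_n) i j :
  (delta_mx (0 : 'I_1) i *m M *m delta_mx j (0 : 'I_1)) 0 0 = M i j.
Proof. by rewrite -rowE -colE !mxE. Qed.

Lemma rho_spec n (rho : 'M[C]_n) : density rho -> rho \in unitmx ->
  let P := spectralmx rho in let D := spectral_diag rho in
  [/\ rho = adjmx P *m diag_mx D *m P,
      forall j, D 0 j = (complex.Re (D 0 j))%:C%C,
      forall j, 0 < complex.Re (D 0 j) &
      \sum_j complex.Re (D 0 j) = 1].
Proof.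
move=> [hr [pr tr]] ur P D.
have [eR DR] := spec_herm hr.
rewrite -/P -/D in eR DR.
split => //.
- move=> j.
  have ge : 0 <= complex.Re (D 0 j).
    have := pr (delta_mx 0 j *m P).
    rewrite adjmx_mul adjmx_delta {1}eR !mulmxA.
    rewrite -(mulmxA _ P) spec_mulV mulmx1 -(mulmxA _ P) spec_mulV mulmx1.
    by rewrite entry_delta mxE eqxx mulr1n {1}DR ler0c.
  rewrite lt_def ge andbT; apply/eqP => h0.
  move: ur; rewrite unitmxE eR !det_mulmx det_diag unitfE.
  rewrite (bigD1 j) //= DR h0 mul0r mulr0 mul0r.
  by rewrite eqxx.
- apply: (@complexI R); rewrite rmorph_sum /=.
  rewrite (eq_bigr (fun j => D 0 j)); last by move=> j _; rewrite -DR.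
  by rewrite -mxtrace_diag -[(1%:C)%C]tr eR -spec_inv trace_conj // spec_unit.
Qed.
End Rho.
Section Dir2.
Variable R : realType.
Local Notation C := R[i].

Lemma diag_mxZ n a (D : 'rV[C]_n) : diag_mx (a *: D) = a *: diag_mx D.
Proof. by apply/matrixP => i j; rewrite !mxE mulrnAr. Qed.

Lemma diag_mxD n (D1 D2 : 'rV[C]_n) : diag_mx (D1 + D2) = diag_mx D1 + diag_mx D2.
Proof. by apply/matrixP => i j; rewrite !mxE mulrnDl. Qed.

Lemma conj_addc n (P A : 'M[C]_n) c : P \in unitmx ->
  invmx P *m (A + c%:M) *m P = invmx P *m A *m P + c%:M.
Proof.
move=> uP; rewrite mulmxDr mulmxDl mul_mx_scalar -scalemxAl mulVmx //.
by rewrite scalemx1.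
Qed.

Lemma Re_real (x : R) : complex.Re ((x%:C)%C : C) = x.
Proof. by []. Qed.

Lemma herm_step n (rho G : 'M[C]_n) (alpha : R) : hermmx G ->
  hermmx (logmx rho - ((alpha%:C)%C *: G)).
Proof.
move=> hG; apply: herm_add; first exact: mxfun_herm.
by apply: herm_opp; apply: hermZ.
Qed.

Lemma dir2 n (rho G : 'M[C]_n) (alpha : R) : density rho -> rho \in unitmx ->
  hermmx G -> 0 < alpha -> rho_step rho G alpha = rho ->
  exists c : R, G = ((c%:C)%C)%:M.
Proof.
move=> dr ur hG a0 hstep.
have [eR DR Dpos Dsum] := rho_spec dr ur.
set P := spectralmx rho in eR DR Dpos Dsum.
set D := spectral_diag rho in eR DR Dpos Dsum.
have uP : P \in unitmx by exact: spec_unit.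
set X := logmx rho - ((alpha%:C)%C *: G).
have hX : hermmx X by exact: herm_step.
have [eX muR] := spec_herm hX.
set Q := spectralmx X in eX muR; set mu := spectral_diag X in eX muR.
have uQ : Q \in unitmx by exact: spec_unit.
set E := expmx X.
have eE : E = invmx Q *m diag_mx (gD (@expR R) mu) *m Q by [].
have [j0 _] : exists j : 'I_n, true.
  case: (pickP (fun _ : 'I_n => true)) => [j _|h]; first by exists j.
  by move: Dsum; rewrite big_pred0 // => /eqP; rewrite eq_sym oner_eq0.
set t := \sum_j expR (complex.Re (mu 0 j)).
have t0 : 0 < t.
  rewrite /t (bigD1 j0) //=; apply: ltr_wpDr; last exact: expR_gt0.
  by apply: sumr_ge0 => j _; apply: ltW; exact: expR_gt0.
have trE : \tr E = (t%:C)%C.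
  rewrite eE trace_conj // mxtrace_diag /t rmorph_sum /=.
  by apply: eq_bigr => j _; rewrite mxE.
have eE2 : E = (t%:C)%C *: rho.
  have tn0 : (t%:C)%C != 0 :> C 
    by apply/eqP => h; move: (congr1 (@complex.Re R) h) => /= h'; rewrite h' ltxx in t0.
  move: hstep; rewrite /rho_step /= -/X -/E trE => h.
  by rewrite -h scalerKV.
have hL1 : logmx E = X.
  rewrite /logmx (mxfun_uniq _ (mxfun_herm _ _) uQ eE).
  have -> : gD (@ln R) (gD (@expR R) mu) = mu.
    apply/matrixP => i j; rewrite !mxE (ord1 i) /= expRK.
    by rewrite -muR.
  by rewrite spec_inv -eX.
have hL2 : logmx E = logmx rho + ((ln t)%:C%C)%:M.
  rewrite eE2.
  have e1 : (t%:C)%C *: rho = invmx P *m diag_mx ((t%:C)%C *: D) *m P.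
    by rewrite diag_mxZ -scalemxAr -scalemxAl spec_inv -eR.
  have hr : hermmx rho by case: dr.
  rewrite /logmx (mxfun_uniq _ (hermZ t hr) uP e1).
  have -> : gD (@ln R) ((t%:C)%C *: D) = gD (@ln R) D + const_mx ((ln t)%:C)%C.
    apply/matrixP => i j; rewrite !mxE (ord1 i) ReM_real lnM ?posrE ?Dpos //.
    by rewrite rmorphD addrC.
  by rewrite diag_mxD diag_const_mx conj_addc // spec_inv -mxfunE.
have hA : (alpha%:C)%C *: G = - ((ln t)%:C%C)%:M.
  have := etrans (esym hL1) hL2; rewrite /X => /addrI h.
  by rewrite -h opprK.
exists (- ln t / alpha).
have an : (alpha%:C)%C != 0 :> C.
  by apply/eqP => h; move: (congr1 (@complex.Re R) h) => /= h'; rewrite h' ltxx in a0.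
rewrite -[G](scalerK an) hA scalerN scale_scalar_mx -(raddfN (@scalar_mx _ n)).
congr (_%:M); rewrite -rmorphV ?unitfE ?gt_eqF // -rmorphM -rmorphN /=.
by rewrite mulrC mulNr.
Qed.
End Dir2.
Section Dir1.
Variable R : realType.
Local Notation C := R[i].

Lemma tr1E (M : 'M[C]_1) : \tr M = M 0 0.
Proof. by rewrite /mxtrace big_ord1. Qed.

Lemma mul11E (A B : 'M[C]_1) : (A *m B) 0 0 = A 0 0 * B 0 0.
Proof. by rewrite mxE big_ord1. Qed.

Lemma adjE m n (M : 'M[C]_(m, n)) i j : adjmx M i j = conjC (M j i).
Proof. by rewrite !mxE. Qed.

Lemma herm_pure n (w : 'rV[C]_n) : hermmx (adjmx w *m w).
Proof. by apply/hermP; rewrite adjmx_mul adjmxK. Qed.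

Lemma pure_density n (w : 'rV[C]_n) (a : R) : 0 <= a ->
  a * complex.Re ((w *m adjmx w) 0 0) = 1 ->
  (w *m adjmx w) 0 0 = (complex.Re ((w *m adjmx w) 0 0))%:C%C ->
  density ((a%:C)%C *: (adjmx w *m w)).
Proof.
move=> a0 ha hr; split; last split.
- exact/hermZ/herm_pure.
- move=> v; rewrite -scalemxAr -scalemxAl mxscaleE !mulmxA.
  rewrite -(mulmxA (v *m adjmx w)) -[w *m adjmx v]adjmxK adjmx_mul adjmxK.
  set x := v *m adjmx w.
  rewrite mul11E adjE.
  by rewrite mulr_ge0 ?ler0c // mulcJ_ge0.
- rewrite mxtraceZ mxtrace_mulC tr1E hr -rmorphM /= ha.
  by [].
Qed.

Definition quad n (M : 'M[C]_n) (u : 'rV[C]_n) := (u *m M *m adjmx u) 0 0.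

Lemma ReB (x y : C) : complex.Re (x - y) = complex.Re x - complex.Re y.
Proof. by case: x; case: y. Qed.

Lemma ReD (x y : C) : complex.Re (x + y) = complex.Re x + complex.Re y.
Proof. by case: x; case: y. Qed.

Lemma keyineq n (f : 'M[C]_n -> R) rho G : is_gradient f rho G -> minimizer f rho ->
  rho \in unitmx ->
  let P := spectralmx rho in let D := spectral_diag rho in
  let Y := P *m G *m adjmx P in
  forall (u : 'rV[C]_n) (a : R), 0 <= a ->
  a * complex.Re ((u *m adjmx u) 0 0) = 1 ->
  (u *m adjmx u) 0 0 = (complex.Re ((u *m adjmx u) 0 0))%:C%C ->
  complex.Re (\sum_k Y k k * D 0 k) <= a * complex.Re (quad Y u).
Proof.
move=> hg mr ur P D Y u a a0 ha hr.
have [dr _] := mr.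
have [eR DR Dpos Dsum] := rho_spec dr ur.
have hG : adjmx G = G by apply/hermP; case: hg.
set w := u *m P.
have ww : w *m adjmx w = u *m adjmx u.
  by rewrite /w adjmx_mul mulmxA -(mulmxA u) spec_mulV mulmx1.
have hd : density ((a%:C)%C *: (adjmx w *m w)) by apply: pure_density; rewrite ?ww.
have := dirA hg mr hd.
rewrite /hsdot hG mulmxBr raddfB /= ReB subr_ge0.
have e1 : \tr (G *m rho) = \sum_k Y k k * D 0 k.
  rewrite {1}eR !mulmxA mxtrace_mulC !mulmxA -/Y /mxtrace.
  by apply: eq_bigr => k _; rewrite mul_mx_diag mxE.
have e2 : \tr (G *m ((a%:C)%C *: (adjmx w *m w))) = (a%:C)%C * quad Y u.
  rewrite -scalemxAr mxtraceZ mulmxA mxtrace_mulC mulmxA tr1E.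
  by rewrite /quad /Y /w adjmx_mul !mulmxA.
by rewrite e1 e2 ReM_real.
Qed.
End Dir1.
Section Dir1b.
Variable R : realType.
Local Notation C := R[i].

Lemma quad_pair n (M : 'M[C]_n) i j z :
  quad M (delta_mx 0 i + z *: delta_mx 0 j) =
  M i i + conjC z * M i j + z * M j i + z * conjC z * M j j.
Proof.
rewrite /quad adjmxD adjmxZ !adjmx_delta !mulmxDl !mulmxDr -!scalemxAl -!scalemxAr.
rewrite !mxaddE !mxscaleE !entry_delta; ring.
Qed.

Lemma quad_delta n (M : 'M[C]_n) i : quad M (delta_mx 0 i) = M i i.
Proof. by rewrite /quad adjmx_delta entry_delta. Qed.

Lemma uu_quad n (u : 'rV[C]_n) : (u *m adjmx u) 0 0 = quad 1%:M u.
Proof. by rewrite /quad mulmx1. Qed.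

Lemma real_of_conj (x : C) : conjC x = x -> x = (complex.Re x)%:C%C.
Proof.
case: x => a b /= [] h; congr Complex.
have : b = 0 by lra.
by [].
Qed.

Lemma zero_of (x : C) : complex.Re x = 0 -> complex.Im x = 0 -> x = 0.
Proof. by case: x => a b /= -> ->. Qed.

Lemma zi : ('i%C : C) * conjC 'i%C = 1.
Proof. by simpc. Qed.
Lemma zmi : (-'i%C : C) * conjC (-'i%C) = 1.
Proof. by simpc. Qed.
Lemma zm1 : (-1 : C) * conjC (-1) = 1.
Proof. by simpc. Qed.
Lemma z1 : (1 : C) * conjC (1) = 1.
Proof. by simpc. Qed.

Lemma dir1 n (f : 'M[C]_n -> R) rho G : is_gradient f rho G -> minimizer f rho ->
  rho \in unitmx -> exists c : R, G = ((c%:C)%C)%:M.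
Proof.
move=> hg mr ur.
have [dr _] := mr.
have [eR DR Dpos Dsum] := rho_spec dr ur.
have hK := keyineq hg mr ur.
set P := spectralmx rho in eR DR Dpos Dsum hK.
set D := spectral_diag rho in eR DR Dpos Dsum hK.
set Y := P *m G *m adjmx P in hK.
set m := complex.Re (\sum_k Y k k * D 0 k) in hK.
have hG : adjmx G = G by apply/hermP; case: hg.
have hY : adjmx Y = Y by rewrite /Y !adjmx_mul adjmxK hG mulmxA.
have YE i j : Y j i = conjC (Y i j) by rewrite -{1}hY adjE.
have Yr k : Y k k = (complex.Re (Y k k))%:C%C.
  by apply: real_of_conj; rewrite -YE.
have dge k : m <= complex.Re (Y k k).
  have := hK (delta_mx 0 k) 1 ler01.
  rewrite uu_quad quad_delta mxE eqxx mul1r quad_delta => /(_ erefl erefl).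
  by rewrite mul1r.
have meq : m = \sum_k complex.Re (Y k k) * complex.Re (D 0 k).
  rewrite /m (eq_bigr (fun k => ((complex.Re (Y k k) * complex.Re (D 0 k))%:C)%C)).
    by rewrite -rmorph_sum.
  by move=> k _; rewrite rmorphM /= -Yr -DR.
have deq k : complex.Re (Y k k) = m.
  have h0 : \sum_k complex.Re (D 0 k) * (complex.Re (Y k k) - m) = 0.
    rewrite (eq_bigr (fun k => complex.Re (Y k k) * complex.Re (D 0 k) - m * complex.Re (D 0 k))).
      by rewrite sumrB -mulr_sumr Dsum mulr1 -meq subrr.
    by move=> j _; rewrite mulrC mulrBl.
  have hz : complex.Re (D 0 k) * (complex.Re (Y k k) - m) = 0.
    apply: (psumr_eq0P _ h0) => // j _.
    by rewrite mulr_ge0 ?subr_ge0 ?dge // ltW.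
  move/eqP: hz; rewrite mulf_eq0 (gt_eqF (Dpos k)) /= subr_eq0.
  by move/eqP.
have off i j : i != j -> forall z : C, z * conjC z = 1 ->
    0 <= complex.Re (conjC z * Y i j) + complex.Re (z * conjC (Y i j)).
  move=> ij z hz.
  have q1 : quad 1%:M (delta_mx 0 i + z *: delta_mx 0 j) = 1 + 1.
    rewrite quad_pair !mxE eqxx (negbTE ij) eq_sym (negbTE ij) /= hz.
    by rewrite !mulr0 !addr0 eqxx mulr1.
  have : m <= 1 / 2 * complex.Re (quad Y (delta_mx 0 i + z *: delta_mx 0 j)).
    apply: hK; rewrite ?uu_quad ?q1 ?ReD /=.
    - lra.
    - lra.
    - by rewrite rmorphD.
  rewrite quad_pair (YE i j) hz mul1r !ReD (deq i) mul1r (deq j).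
  lra.
have offz i j : i != j -> Y i j = 0.
  move=> ij.
  have h1 := off i j ij 1 z1.
  have h2 := off i j ij (-1) zm1.
  have h3 := off i j ij 'i%C zi.
  have h4 := off i j ij (-'i%C) zmi.
  move: h1 h2 h3 h4; case: (Y i j) => a b /= h1 h2 h3 h4.
  have -> : a = 0 by lra.
  have -> : b = 0 by lra.
  by [].
have YE2 : Y = ((m%:C)%C)%:M.
  apply/matrixP => i j; rewrite [RHS]mxE.
  case: (eqVneq i j) => [<-|ij]; first by rewrite Yr deq /= mulr1n.
  by rewrite offz // mulr0n.
exists m.
have -> : G = adjmx P *m Y *m P.
  by rewrite /Y !mulmxA spec_Vmul mul1mx -mulmxA spec_Vmul mulmx1.
by rewrite YE2 mul_mx_scalar -scalemxAl spec_Vmul scalemx1.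
Qed.
End Dir1b.
Section Final.
Variable R : realType.
Local Notation C := R[i].

Lemma step_scalar n (rho : 'M[C]_n) (c alpha : R) : density rho -> rho \in unitmx ->
  rho_step rho ((c%:C)%C)%:M alpha = rho.
Proof.
move=> dr ur.
have [eR DR Dpos Dsum] := rho_spec dr ur.
set P := spectralmx rho in eR DR Dpos Dsum.
set D := spectral_diag rho in eR DR Dpos Dsum.
have uP : P \in unitmx by exact: spec_unit.
set X := logmx rho - ((alpha%:C)%C *: ((c%:C)%C)%:M).
have hX : hermmx X by apply: herm_step; apply/hermP; rewrite -scalemx1 adjmxZ adjmx1 conj_real.
have eX : X = invmx P *m diag_mx (gD (@ln R) D + const_mx ((- (alpha * c))%:C)%C) *m P.
  rewrite diag_mxD diag_const_mx conj_addc // /X /logmx mxfunE spec_inv.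
  by rewrite scale_scalar_mx -rmorphM -(raddfN (@scalar_mx _ n)) -rmorphN.
set k := expR (- (alpha * c)).
have k0 : 0 < k by exact: expR_gt0.
have eE : expmx X = (k%:C)%C *: rho.
  rewrite /expmx (mxfun_uniq _ hX uP eX).
  have -> : gD (@expR R) (gD (@ln R) D + const_mx ((- (alpha * c))%:C)%C) = (k%:C)%C *: D.
    apply/matrixP => i j; rewrite !mxE (ord1 i) ReD /= expRD lnK ?posrE ?Dpos //.
    by rewrite {2}DR -rmorphM mulrC.
  by rewrite diag_mxZ -scalemxAr -scalemxAl spec_inv -eR.
rewrite /rho_step /= -/X eE mxtraceZ.
have [_ [_ ->]] := dr.
rewrite mulr1 scalerK //.
by apply/eqP => h; move: (congr1 (@complex.Re R) h) => /= h'; rewrite h' ltxx in k0.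
Qed.

Theorem lemma6' (d : nat) (f : 'M[R[i]]_d -> R)
    (rho G : 'M[R[i]]_d) :
  convex_herm f -> density rho -> rho \in unitmx -> is_gradient f rho G ->
  (minimizer f rho -> forall alpha : R, 0 <= alpha -> rho_step rho G alpha = rho) /\
  ((exists2 alpha : R, 0 < alpha & rho_step rho G alpha = rho) -> minimizer f rho).
Proof.
move=> cf dr ur hg; split.
  move=> mr alpha _.
  have [c ->] := dir1 hg mr ur.
  exact: step_scalar.
move=> [alpha a0 hs].
have hG : hermmx G by case: hg.
have [c eG] := dir2 dr ur hG a0 hs.
split => // sigma ds.
have := dirB cf hg dr ds.
have -> : hsdot G (sigma - rho) = 0.
  rewrite /hsdot (proj1 (hermP G) hG) eG mul_scalar_mx mxtraceZ raddfB /=.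
  have [_ [_ ->]] := dr; have [_ [_ ->]] := ds.
  by rewrite subrr mulr0.
by rewrite /= subr_ge0.
Qed.
End Final.

Unset Implicit Arguments.

Theorem lemma6 (R : realType) (d : nat) (f : 'M[R[i]]_d -> R)
    (rho G : 'M[R[i]]_d) :
  convex_herm f -> density rho -> rho \in unitmx -> is_gradient f rho G ->
  (minimizer f rho -> forall alpha : R, 0 <= alpha -> rho_step rho G alpha = rho) /\
  ((exists2 alpha : R, 0 < alpha & rho_step rho G alpha = rho) -> minimizer f rho).
Proof. exact: (@lemma6' R d f rho G). Qed.
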